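(* Let $m \in \mathbb{F}_2[t]$ be odd with $\deg m = d$, and let $N \ge 1$. The map $\Phi_m : \mathbb{F}_2[t]/(t^N) \to \{0,1\}^N$ sending the class of $f$ to the first $N$ terms $(p_0,\dots,p_{N-1})$ of the parity sequence of $f$ is well defined and is a bijection. Moreover, for each $(p_0,\dots,p_{N-1}) \in \{0,1\}^N$, with $s(N) = \sum_{i=0}^{N-1} p_i$, there exist $g_{N-1}, h_{N-1} \in \mathbb{F}_2[t]$ with $\deg g_{N-1} < N$ and $\deg h_{N-1} < d\, s(N)$ such that the polynomials whose parity sequence begins with $(p_0,\dots,p_{N-1})$ are exactly those of the form $f = g_{N-1} + t^N q$ with $q \in \mathbb{F}_2[t]$, and for every such $f$ one has $T^N(f) = h_{N-1} + m^{s(N)} q$. In particular, the first $N$ parity terms of a uniformly random polynomial of degree $< N$ are uniformly distributed on $\{0,1\}^N$.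
   Context: A polynomial $m \in \mathbb{F}_2[t]$ is called odd if $m(0) = 1$. For a fixed odd $m$, the $mx+1$ map $T:\mathbb{F}_2[t]\to\mathbb{F}_2[t]$ is $T(f) = f/t$ if $f \equiv 0 \pmod t$ and $T(f) = (mf+1)/t$ if $f \not\equiv 0 \pmod t$. Degrees are in $t$, with $\deg 0 = -\infty$. The parity sequence of $f$ is $(p_0, p_1, p_2, \dots)$ where $p_k = T^k(f)(0) \in \{0,1\}$ is the constant term of $T^k(f)$. *)

(* Defs.v *)
From HB Require Import structures.
From mathcomp Require Import all_boot all_order all_algebra.
Set Implicit Arguments. Unset Strict Implicit. Unset Printing Implicit Defensive.
Import GRing.Theory.
Local Open Scope ring_scope.

(* F_2[t] is {poly 'F_2}; the variable t is 'X. *)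
Notation F2 := 'F_2.

Definition is_odd_poly (m : {poly F2}) : Prop := m.[0] = 1.

Definition Tmap (m f : {poly F2}) : {poly F2} :=
  if f.[0] == 0 then f %/ 'X else (m * f + 1) %/ 'X.

Definition parity (m f : {poly F2}) (k : nat) : bool :=
  (iter k (Tmap m) f).[0] == 1.

Definition parity_prefix (m : {poly F2}) (N : nat) (f : {poly F2}) : N.-tuple bool :=
  [tuple parity m f i | i < N].

Definition Phi (m : {poly F2}) (N : nat) (x : {poly %/ ('X^N : {poly F2})}) : N.-tuple bool :=
  parity_prefix m N (x : {poly F2}).

Arguments parity_prefix m N f : clear implicits.
Arguments Phi m N x : clear implicits.

(* Main.v *)
Require Import Defs.
From HB Require Import structures.
From mathcomp Require Import all_boot all_order all_algebra.
From mathcomp Require Import zify ring.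
Import GRing.Theory.
Local Open Scope ring_scope.

Lemma F2cases (x : F2) : x = 0 \/ x = 1.
Proof. case: x => [[|[|n]] Hn]; [left|right|]; try exact: val_inj. by []. Qed.

Lemma bitP (e : F2) (x : bool) : ((e == 1) = x) <-> e = (x : nat)%:R.
Proof.
case: x; case: (F2cases e) => -> /=; split => //; rewrite ?eqxx ?oner_eq0 //.
Qed.

Lemma decomp (r : {poly F2}) : r = r.[0]%:P + 'X * (r %/ 'X).
Proof.
have H := ltn_modp r ('X : {poly F2}).
rewrite size_polyX polyX_eq0 /= in H.
have Hc := size1_polyC H.
have E := divp_eq r 'X.
have -> : r.[0] = (r %% 'X)`_0.
    by rewrite {1}E Hc !hornerE /= coefC.
by rewrite -Hc {1}E addrC mulrC.
Qed.

Lemma divXD (a b : {poly F2}) : (a + 'X * b) %/ 'X = a %/ 'X + b.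
Proof. by rewrite divpD mulKp ?polyX_eq0. Qed.

Lemma T0 m v : v.[0] = 0 -> Tmap m v = v %/ 'X.
Proof. by rewrite /Tmap => ->; rewrite eqxx. Qed.

Lemma T1 m v : v.[0] = 1 -> Tmap m v = (m * v + 1) %/ 'X.
Proof. by rewrite /Tmap => ->; rewrite oner_eq0. Qed.

Lemma key (m : {poly F2}) (d : nat) (hm : m.[0] = 1) (hs : size m = d.+1)
  (p : nat -> bool) (N : nat) :
 exists g h : {poly F2}, (size g <= N)%N /\
  (size h <= d * \sum_(i < N) (p i : nat))%N /\
  (forall f, (forall i, (i < N)%N -> parity m f i = p i) <->
              exists q, f = g + 'X^N * q) /\
  (forall q, iter N (Tmap m) (g + 'X^N * q) = h + m ^+ (\sum_(i < N) (p i : nat)) * q).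
Proof.
elim: N => [|N [g [h [Hg [Hh [Hf Hi]]]]]].
  exists 0, 0; rewrite big_ord0 size_poly0 !muln0; split=> //; split=> //; split.
    move=> f; split=> _; first by exists f; rewrite add0r expr0 mul1r.
    by [].
  by move=> q; rewrite /= !add0r expr0 mul1r.
set s := (\sum_(i < N) _)%N in Hh Hi *.
rewrite big_ord_recr /= -/s.
set b : F2 := (p N : nat)%:R.
set c := b - h.[0].
set u := h + m ^+ s * c%:P.
have hms : (m ^+ s).[0] = 1 by rewrite horner_exp hm expr1n.
have hu : u.[0] = b by rewrite /u hornerD hornerM hms hornerC mul1r /c addrC subrK.
have par : forall q, parity m (g + 'X^N * q) N = p N <-> q.[0] = c.
  move=> q; rewrite /parity Hi hornerD hornerM hms mul1r bitP -/b /c.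
  split => [<-|->]; [ring | ring].
exists (g + 'X^N * c%:P).
exists (if p N then (m * u + 1) %/ 'X else u %/ 'X).
have su : (size u <= (d * s).+1)%N.
  rewrite /u (leq_trans (size_add _ _)) // geq_max (leq_trans Hh) //.
  rewrite mulrC mul_polyC (leq_trans (size_scale_leq _ _)) //.
  by rewrite (leq_trans (size_poly_exp_leq _ _)) // hs mulnC.
split.
  rewrite (leq_trans (size_add _ _)) // geq_max (leq_trans Hg) //.
  by rewrite mulrC mul_polyC (leq_trans (size_scale_leq _ _)) // size_polyXn.
split.
  have E1 : (size ('X : {poly F2})).-1 = 1%N by rewrite size_polyX.
  case: (p N) => /=; rewrite size_divp ?polyX_eq0 // E1.
    have := size_add (m * u) 1; have := size_mul_leq m u; rewrite size_poly1 hs.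
    move=> H1 H2; move: su H1 H2.
    move: (size u) (size (m * u)) (size (m * u + 1)) => x y z; lia.
  by move: su; move: (size u) => x; lia.
split.
  move=> f; split.
    move=> H.
    have [q Eq] : exists q, f = g + 'X^N * q by apply/Hf => i Hi'; apply: H; lia.
    have Hq : q.[0] = c by apply/par; rewrite -Eq; apply: H.
    exists (q %/ 'X); rewrite Eq {1}(decomp q) Hq exprSr; ring.
  move=> [q'' Eq] i Hi'.
  have Eq' : f = g + 'X^N * (c%:P + 'X * q'') by rewrite Eq exprSr; ring.
  have : (i < N \/ i = N)%N by lia.
  case=> [HiN|->].
    by move: i HiN {Hi'}; apply/Hf; exists (c%:P + 'X * q'').
  by rewrite Eq'; apply/par; rewrite !hornerE /=; ring.
move=> q''.
have -> : g + 'X^N * c%:P + 'X^(N.+1) * q'' = g + 'X^N * (c%:P + 'X * q'')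
  by rewrite exprSr; ring.
rewrite Hi.
have -> : h + m ^+ s * (c%:P + 'X * q'') = u + 'X * (m ^+ s * q'') by rewrite /u; ring.
have hv : (u + 'X * (m ^+ s * q'')).[0] = b by rewrite !hornerE /= -hu /u !hornerE; ring.
move: hv; rewrite /b; case: (p N) => /= hv.
  rewrite T1 // addn1 exprS.
  have -> : m * (u + 'X * (m ^+ s * q'')) + 1 = (m * u + 1) + 'X * (m * m ^+ s * q'') by ring.
  by rewrite divXD.
by rewrite T0 // addn0 divXD.
Qed.

Lemma prefixP m N f (p : N.-tuple bool) :
  parity_prefix m N f = p <-> forall i, (i < N)%N -> parity m f i = nth false p i.
Proof.
split.
  move=> <- i Hi; have := tnth_mktuple (fun i : 'I_N => parity m f i) (Ordinal Hi).
  by rewrite (tnth_nth false) /= => ->.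
move=> H; apply: eq_from_tnth => j; rewrite tnth_mktuple (tnth_nth false).
exact: H.
Qed.

Lemma shift m d (hm : m.[0] = 1) (hs : size m = d.+1) N f r i :
  (i < N)%N -> parity m (f + 'X^N * r) i = parity m f i.
Proof.
have [g [h [_ [_ [Hf _]]]]] := @key m d hm hs (parity m f) N.
have [q Eq] : exists q, f = g + 'X^N * q by apply/Hf.
move: i; apply/Hf; exists (q + r); rewrite Eq; ring.
Qed.

Lemma uniq_pref m d (hm : m.[0] = 1) (hs : size m = d.+1) N (x y : {poly F2}) :
  (size x <= N)%N -> (size y <= N)%N ->
  (forall i, (i < N)%N -> parity m x i = parity m y i) -> x = y.
Proof.
move=> sx sy Hxy.
have [g [h [_ [_ [Hf _]]]]] := @key m d hm hs (parity m x) N.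
have [q Eq] : exists q, x = g + 'X^N * q by apply/Hf.
have [q' Eq'] : exists q, y = g + 'X^N * q by apply/Hf => i Hi; rewrite Hxy.
have : x - y = 'X^N * (q - q') by rewrite Eq Eq'; ring.
have [->|nz] := eqVneq (q - q') 0.
  by rewrite mulr0 => /eqP; rewrite subr_eq0 => /eqP.
move=> E; have := size_add x (- y); rewrite size_opp E mulrC size_mulXn //.
have := size_poly_gt0 (q - q'); rewrite nz.
move: (size (q - q')) (size x) (size y) sx sy => a b c; lia.
Qed.

Lemma card1 m d (hm : m.[0] = 1) (hs : size m = d.+1) N (p : N.-tuple bool) :
  #|[pred x : {poly_N F2} | parity_prefix m N (x : {poly F2}) == p]| = 1%N.
Proof.
have [g [h [Hg [_ [Hf _]]]]] := @key m d hm hs (fun i => nth false p i) N.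
have Hg' : g \is a poly_of_size N by rewrite qualifE.
have Pg : parity_prefix m N g = p.
  by apply/prefixP; apply/Hf; exists 0; rewrite mulr0 addr0.
apply: (@eq_card1 _ (NPoly Hg')) => y; rewrite !inE.
apply/eqP/eqP => [Py|->//].
apply: val_inj => /=; apply: (@uniq_pref m d hm hs N); [exact: size_npoly|exact: Hg|move=> i Hi].
by rewrite (proj1 (@prefixP m N (y : {poly F2}) p) Py i Hi) (proj1 (@prefixP m N g p) Pg i Hi).
Qed.

Theorem mainTheorem2 (m : {poly F2}) (d N : nat) :
  is_odd_poly m -> size m = d.+1 -> (1 <= N)%N ->
  (forall f : {poly F2}, Phi m N (@in_qpoly _ ('X^N) f) = parity_prefix m N f) /\
  bijective (Phi m N) /\
  (forall p : N.-tuple bool,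
     let s := (\sum_(i < N) (tnth p i : nat))%N in
     exists g h : {poly F2},
       (size g <= N)%N /\ (size h <= d * s)%N /\
       (forall f : {poly F2},
          parity_prefix m N f = p <-> exists q : {poly F2}, f = g + 'X^N * q) /\
       (forall q : {poly F2},
          iter N (Tmap m) (g + 'X^N * q) = h + m ^+ s * q)) /\
  (forall p p' : N.-tuple bool,
     #|[pred x : {poly_N F2} | parity_prefix m N (x : {poly F2}) == p]| =
     #|[pred x : {poly_N F2} | parity_prefix m N (x : {poly F2}) == p']|).
Proof.
rewrite /is_odd_poly => hm hs HN.
have MK : mk_monic ('X^N : {poly F2}) = 'X^N.
  by rewrite /mk_monic size_polyXn monicXn ltnS HN.
split.
  move=> f; rewrite /Phi.
  have [r Er] : exists r, (@in_qpoly _ ('X^N) f : {poly F2}) = f + 'X^N * r.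
    exists (- Pdiv.CommonRing.rdivp f 'X^N).
    rewrite /= MK {2}(Pdiv.RingMonic.rdivp_eq (monicXn F2 N) f); ring.
  rewrite Er; apply/prefixP => i Hi; rewrite (@shift m d hm hs) //.
  by move: i Hi; apply/prefixP.
split.
  apply: inj_card_bij.
    move=> x y /prefixP Hxy; apply: val_inj.
    have SZ : size (mk_monic ('X^N : {poly F2})) = N.+1 by rewrite MK size_polyXn.
    have sx : (size (x : {poly F2}) <= N)%N by rewrite -ltnS -SZ size_mk_monic.
    have sy : (size (y : {poly F2}) <= N)%N by rewrite -ltnS -SZ size_mk_monic.
    apply: (@uniq_pref m d hm hs N _ _ sx sy) => i Hi.
    rewrite Hxy //; apply/esym; move: i Hi; by apply/prefixP.
  by rewrite card_tuple card_qpoly MK size_polyXn card_Fp // card_bool.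
split.
  move=> p.
  have Es : (\sum_(i < N) (tnth p i : nat))%N = (\sum_(i < N) (nth false p i : nat))%N.
    by apply: eq_bigr => i _; rewrite (tnth_nth false).
  have [g [h [Hg [Hh [Hf Hi]]]]] := @key m d hm hs (fun i => nth false p i) N.
  exists g, h; rewrite Es; split=> //; split=> //; split=> // f.
  by rewrite prefixP.
by move=> p p'; rewrite (@card1 m d hm hs N) (@card1 m d hm hs N).
Qed.
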